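(* In the While-language extended with non-deterministic input, for every command $c$ and stores $\sigma,\sigma'$: if $(c,\sigma)\to^\infty$ then $(c,\sigma,\Downarrow)\Rightarrow^{co}_G\sigma',\Uparrow$.
   Context: Extended While-language syntax: variables $x$ range over a countably infinite set $\mathit{Var}$; $n$ ranges over natural numbers; values are $v ::= \mathsf{null}\mid n$ ($\mathsf{null}$ distinct from every natural number); expressions are $e ::= v\mid x\mid e_1\oplus e_2\mid\mathsf{input}$ with $\oplus\in\{+,-,*\}$, where $\oplus(n_1,n_2)$ is the result of the operation on naturals; commands are $c ::= \mathsf{skip}\mid\mathsf{alloc}\ x\mid x:=e\mid c_1;c_2\mid \mathsf{if}\ e\ c_1\ c_2\mid\mathsf{while}\ e\ c$. A store $\sigma$ is a finite partial map from $\mathit{Var}$ to values, with domain $\mathrm{dom}(\sigma)$, lookup $\sigma(x)$, update $\sigma[x\mapsto v]$. Expression evaluation $(e,\sigma)\Rightarrow_E v$ is the least relation with: $(v,\sigma)\Rightarrow_E v$; $(x,\sigma)\Rightarrow_E\sigma(x)$ if $x\in\mathrm{dom}(\sigma)$; if $(e_1,\sigma)\Rightarrow_E n_1$ and $(e_2,\sigma)\Rightarrow_E n_2$ with $n_1,n_2$ naturals then $(e_1\oplus e_2,\sigma)\Rightarrow_E\oplus(n_1,n_2)$; and $(\mathsf{input},\sigma)\Rightarrow_E v$ for every value $v$. Small-step relation $(c,\sigma)\to(c',\sigma')$ is the least relation with: $(\mathsf{alloc}\ x,\sigma)\to(\mathsf{skip},\sigma[x\mapsto\mathsf{null}])$ if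 $x\notin\mathrm{dom}(\sigma)$; $(x:=e,\sigma)\to(\mathsf{skip},\sigma[x\mapsto v])$ if $x\in\mathrm{dom}(\sigma)$ and $(e,\sigma)\Rightarrow_E v$; $(c_1;c_2,\sigma)\to(c_1';c_2,\sigma')$ if $(c_1,\sigma)\to(c_1',\sigma')$; $(\mathsf{skip};c_2,\sigma)\to(c_2,\sigma)$; $(\mathsf{if}\ e\ c_1\ c_2,\sigma)\to(c_1,\sigma)$ if $(e,\sigma)\Rightarrow_E v$, $v\neq 0$; $(\mathsf{if}\ e\ c_1\ c_2,\sigma)\to(c_2,\sigma)$ if $(e,\sigma)\Rightarrow_E 0$; $(\mathsf{while}\ e\ c,\sigma)\to(c;\mathsf{while}\ e\ c,\sigma)$ if $(e,\sigma)\Rightarrow_E v$, $v\neq0$; $(\mathsf{while}\ e\ c,\sigma)\to(\mathsf{skip},\sigma)$ if $(e,\sigma)\Rightarrow_E 0$. The predicate $(c,\sigma)\to^\infty$ is coinductively defined (greatest predicate) by: if $(c,\sigma)\to(c',\sigma')$ and $(c',\sigma')\to^\infty$ then $(c,\sigma)\to^\infty$. Flag-based big-step semantics: status flags $\delta ::= \Downarrow\mid\Uparrow$. Expression evaluation $(e,\sigma,\delta)\Rightarrow_{GE}v,\delta'$ is the least relation with: $(v,\sigma,\Downarrow)\Rightarrow_{GE}v,\Downarrow$; $(x,\sigma,\Downarrow)\Rightarrow_{GE}\sigma(x),\Downarrow$ if $x\in\mathrm{dom}(\sigma)$; if $(e_1,\sigma,\Downarrow)\Rightarrow_{GE}n_1,\delta$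 and $(e_2,\sigma,\delta)\Rightarrow_{GE}n_2,\delta'$ ($n_1,n_2$ naturals) then $(e_1\oplus e_2,\sigma,\Downarrow)\Rightarrow_{GE}\oplus(n_1,n_2),\delta'$; $(\mathsf{input},\sigma,\Downarrow)\Rightarrow_{GE}v,\Downarrow$ for every value $v$; and $(e,\sigma,\Uparrow)\Rightarrow_{GE}v,\Uparrow$ for every value $v$. The command rules for judgments $(c,\sigma,\delta)\Rightarrow_G\sigma',\delta'$ are: $(\mathsf{skip},\sigma,\Downarrow)\Rightarrow_G\sigma,\Downarrow$; $(\mathsf{alloc}\ x,\sigma,\Downarrow)\Rightarrow_G\sigma[x\mapsto\mathsf{null}],\Downarrow$ if $x\notin\mathrm{dom}(\sigma)$; $(x:=e,\sigma,\Downarrow)\Rightarrow_G\sigma[x\mapsto v],\delta$ if $x\in\mathrm{dom}(\sigma)$ and $(e,\sigma,\Downarrow)\Rightarrow_{GE}v,\delta$; $(c_1;c_2,\sigma,\Downarrow)\Rightarrow_G\sigma'',\delta'$ if $(c_1,\sigma,\Downarrow)\Rightarrow_G\sigma',\delta$ and $(c_2,\sigma',\delta)\Rightarrow_G\sigma'',\delta'$; $(\mathsf{if}\ e\ c_1\ c_2,\sigma,\Downarrow)\Rightarrow_G\sigma',\delta'$ if $v\ne0$, $(e,\sigma,\Downarrow)\Rightarrow_{GE}v,\delta$ and $(c_1,\sigma,\delta)\Rightarrow_G\sigma',\delta'$; $(\mathsf{if}\ e\ c_1\ c_2,\sigma,\Downarrow)\Rightarrow_G\sigma',\delta'$ if $(e,\sigma,\Downarrow)\Rightarrow_{GE}0,\delta$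 and $(c_2,\sigma,\delta)\Rightarrow_G\sigma',\delta'$; $(\mathsf{while}\ e\ c,\sigma,\Downarrow)\Rightarrow_G\sigma'',\delta''$ if $(e,\sigma,\Downarrow)\Rightarrow_{GE}v,\delta$, $v\ne0$, $(c,\sigma,\delta)\Rightarrow_G\sigma',\delta'$ and $(\mathsf{while}\ e\ c,\sigma',\delta')\Rightarrow_G\sigma'',\delta''$; $(\mathsf{while}\ e\ c,\sigma,\Downarrow)\Rightarrow_G\sigma,\delta$ if $(e,\sigma,\Downarrow)\Rightarrow_{GE}0,\delta$; $(c,\sigma,\Uparrow)\Rightarrow_G\sigma',\Uparrow$ for every store $\sigma'$. $\Rightarrow^{co}_G$ is the coinductive interpretation of these command rules (greatest relation such that every element is the conclusion of a rule instance whose command premises lie in it). *)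

(* Defs.v *)
From mathcomp Require Import all_boot.
From mathcomp Require Import finmap.
Set Implicit Arguments. Unset Strict Implicit. Unset Printing Implicit Defensive.
Local Open Scope fmap_scope.

Definition Var := nat.

Inductive value : Type := VNull | VNat of nat.

Inductive op : Type := OPlus | OMinus | OMult.

(* result of the operation on naturals (truncated subtraction) *)
Definition op_sem (o : op) (n1 n2 : nat) : nat :=
  match o with OPlus => n1 + n2 | OMinus => n1 - n2 | OMult => n1 * n2 end.

Inductive expr : Type :=
| EVal of value
| EVar of Var
| EOp of op & expr & expr
| EInput.

Inductive cmd : Type :=
| Skip
| Alloc of Var
| Assign of Var & expr
| Seq of cmd & cmd
| If of expr & cmd & cmd
| While of expr & cmd.

Definition store := {fmap Var -> value}.

Definition upd (s : store) (x : Var) (v : value) : store := s.[x <- v].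

Inductive evalE : expr -> store -> value -> Prop :=
| E_Val v s : evalE (EVal v) s v
| E_Var x s (Hx : x \in domf s) : evalE (EVar x) s (s.[Hx])
| E_Op o e1 e2 s n1 n2 :
    evalE e1 s (VNat n1) -> evalE e2 s (VNat n2) ->
    evalE (EOp o e1 e2) s (VNat (op_sem o n1 n2))
| E_Input s v : evalE EInput s v.

Inductive step : cmd -> store -> cmd -> store -> Prop :=
| S_Alloc x s : x \notin domf s -> step (Alloc x) s Skip (upd s x VNull)
| S_Assign x e s v : x \in domf s -> evalE e s v -> step (Assign x e) s Skip (upd s x v)
| S_Seq c1 c1' c2 s s' : step c1 s c1' s' -> step (Seq c1 c2) s (Seq c1' c2) s'
| S_SeqSkip c2 s : step (Seq Skip c2) s c2 s
| S_IfT e c1 c2 s v : evalE e s v -> v <> VNat 0 -> step (If e c1 c2) s c1 s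
| S_IfF e c1 c2 s : evalE e s (VNat 0) -> step (If e c1 c2) s c2 s
| S_WhileT e c s v : evalE e s v -> v <> VNat 0 -> step (While e c) s (Seq c (While e c)) s
| S_WhileF e c s : evalE e s (VNat 0) -> step (While e c) s Skip s.

CoInductive diverges : cmd -> store -> Prop :=
| Div c s c' s' : step c s c' s' -> diverges c' s' -> diverges c s.

(* Status flags: Conv = ⇓, Div = ⇑ *)
Inductive flag : Type := Conv | DivF.

Inductive evalGE : expr -> store -> flag -> value -> flag -> Prop :=
| GE_Val v s : evalGE (EVal v) s Conv v Conv
| GE_Var x s (Hx : x \in domf s) : evalGE (EVar x) s Conv (s.[Hx]) Conv
| GE_Op o e1 e2 s n1 n2 d d' :
    evalGE e1 s Conv (VNat n1) d -> evalGE e2 s d (VNat n2) d' ->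
    evalGE (EOp o e1 e2) s Conv (VNat (op_sem o n1 n2)) d'
| GE_Input s v : evalGE EInput s Conv v Conv
| GE_Div e s v : evalGE e s DivF v DivF.

CoInductive evalGco : cmd -> store -> flag -> store -> flag -> Prop :=
| G_Skip s : evalGco Skip s Conv s Conv
| G_Alloc x s : x \notin domf s -> evalGco (Alloc x) s Conv (upd s x VNull) Conv
| G_Assign x e s v d : x \in domf s -> evalGE e s Conv v d ->
    evalGco (Assign x e) s Conv (upd s x v) d
| G_Seq c1 c2 s s' s'' d d' : evalGco c1 s Conv s' d -> evalGco c2 s' d s'' d' ->
    evalGco (Seq c1 c2) s Conv s'' d'
| G_IfT e c1 c2 s s' v d d' : v <> VNat 0 -> evalGE e s Conv v d ->
    evalGco c1 s d s' d' -> evalGco (If e c1 c2) s Conv s' d'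
| G_IfF e c1 c2 s s' d d' : evalGE e s Conv (VNat 0) d ->
    evalGco c2 s d s' d' -> evalGco (If e c1 c2) s Conv s' d'
| G_WhileT e c s s' s'' v d d' d'' : evalGE e s Conv v d -> v <> VNat 0 ->
    evalGco c s d s' d' -> evalGco (While e c) s' d' s'' d'' ->
    evalGco (While e c) s Conv s'' d''
| G_WhileF e c s d : evalGE e s Conv (VNat 0) d -> evalGco (While e c) s Conv s d
| G_Div c s s' : evalGco c s DivF s' DivF.

(* Main.v *)
Require Import Defs.
From mathcomp Require Import all_boot.
From mathcomp Require Import finmap.
From Stdlib Require Import Classical.

Inductive star : cmd -> store -> cmd -> store -> Prop :=
| star_refl c s : star c s c s
| star_step c s c1 s1 c2 s2 : step c s c1 s1 -> star c1 s1 c2 s2 -> star c s c2 s2.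

Lemma evalE_GE e s v : evalE e s v -> evalGE e s Conv v Conv.
Proof. induction 1; econstructor; eauto. Qed.

Lemma step_back c s c' s' t d :
  step c s c' s' -> evalGco c' s' Conv t d -> evalGco c s Conv t d.
Proof.
  intros H; revert t d; induction H; intros t d Hg.
  - inversion Hg; subst. constructor; auto.
  - inversion Hg; subst. econstructor; eauto. apply evalE_GE; auto.
  - inversion Hg; subst. econstructor; eauto.
  - econstructor; [constructor|exact Hg].
  - eapply G_IfT; eauto. apply evalE_GE; eauto.
  - eapply G_IfF; eauto. apply evalE_GE; eauto.
  - inversion Hg; subst. eapply G_WhileT; eauto. apply evalE_GE; eauto.
  - inversion Hg; subst. eapply G_WhileF; eauto. apply evalE_GE; eauto.
Qed.

Lemma star_big c s s' : star c s Skip s' -> evalGco c s Conv s' Conv.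
Proof.
  intros H; remember Skip as k; induction H; subst.
  - constructor.
  - eapply step_back; eauto.
Qed.

Lemma seq_div_step c1 c2 s :
  diverges (Seq c1 c2) s ->
  ~ (exists s1, star c1 s Skip s1 /\ diverges c2 s1) ->
  exists c1' s', step c1 s c1' s' /\ diverges (Seq c1' c2) s' /\
    ~ (exists s1, star c1' s' Skip s1 /\ diverges c2 s1).
Proof.
  intros Hd Hn.
  inversion Hd; subst. inversion H; subst.
  - exists c1', s'; split; [auto|split; auto].
    intros [s1 [Hs Hd2]]; apply Hn; exists s1; split; auto. econstructor; eauto.
  - exfalso; apply Hn; eexists; split; [constructor|eassumption].
Qed.

Arguments seq_div_step {c1 c2 s}.

Lemma seq_div_split c1 c2 s :
  diverges (Seq c1 c2) s ->
  ~ (exists s1, star c1 s Skip s1 /\ diverges c2 s1) -> diverges c1 s.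
Proof.
  revert c1 s. cofix CH. intros c1 s Hd Hn.
  destruct (seq_div_step Hd Hn) as [c1' [s' [Hs [Hd' Hn']]]].
  exact (Div Hs (CH _ _ Hd' Hn')).
Qed.

Arguments seq_div_split {c1 c2 s}.

Lemma seq_div_cases c1 c2 s :
  diverges (Seq c1 c2) s ->
  diverges c1 s \/ (exists s1, star c1 s Skip s1 /\ diverges c2 s1).
Proof.
  intros Hd. destruct (classic (exists s1, star c1 s Skip s1 /\ diverges c2 s1)); auto.
  left; apply (seq_div_split Hd); auto.
Qed.

Arguments seq_div_cases {c1 c2 s}.
Arguments star_big {c s s'}.

Lemma skip_nodiv (s : store) : ~ diverges Skip s.
Proof. intros H; inversion H; subst. inversion H0. Qed.

Lemma if_div e c1 c2 s : diverges (If e c1 c2) s ->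
  (exists v, evalE e s v /\ v <> VNat 0 /\ diverges c1 s) \/
  (evalE e s (VNat 0) /\ diverges c2 s).
Proof. intros Hd; inversion Hd; subst; inversion H; subst; eauto 6. Qed.

Lemma while_div e c s : diverges (While e c) s ->
  exists v, evalE e s v /\ v <> VNat 0 /\ diverges (Seq c (While e c)) s.
Proof.
  intros Hd; inversion Hd; subst; inversion H; subst; eauto.
  exfalso; eapply skip_nodiv; eauto.
Qed.

Lemma simple_nodiv c s : diverges c s ->
  (c = Skip \/ (exists x, c = Alloc x) \/ (exists x e, c = Assign x e)) -> False.
Proof.
  intros Hd [->|[[x ->]|[x [e ->]]]]; inversion Hd; subst; inversion H; subst;
  eapply skip_nodiv; eauto.
Qed.

Arguments if_div {e c1 c2 s}.
Arguments while_div {e c s}.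

Theorem lemma26 (c : cmd) (s s' : store) :
  diverges c s -> evalGco c s Conv s' DivF.
Proof.
  revert c s s'. cofix CH. intros c s s' Hd.
  destruct c.
  - exfalso; eapply simple_nodiv; eauto.
  - exfalso; eapply simple_nodiv; eauto.
  - exfalso; eapply simple_nodiv; eauto 6.
  - destruct (seq_div_cases Hd) as [H1 | [s1 [Hs H2]]].
    + eapply G_Seq; [apply (CH _ _ s' H1)| apply G_Div].
    + eapply G_Seq; [apply (star_big Hs) | apply (CH _ _ s' H2)].
  - destruct (if_div Hd) as [[v [Hv [Hn H1]]] | [Hv H2]].
    + eapply G_IfT; [exact Hn | apply evalE_GE; exact Hv | apply (CH _ _ s' H1)].
    + eapply G_IfF; [apply evalE_GE; exact Hv | apply (CH _ _ s' H2)].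
  - destruct (while_div Hd) as [v [Hv [Hn H0]]].
    destruct (seq_div_cases H0) as [H1 | [s1 [Hs H2]]].
      * eapply G_WhileT; [apply evalE_GE; exact Hv | exact Hn
                          | apply (CH _ _ s' H1) | apply G_Div].
      * eapply G_WhileT; [apply evalE_GE; exact Hv | exact Hn
                          | apply (star_big Hs) | apply (CH _ _ s' H2)].
Qed.
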